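(* Let $(E,\le,u)$ be an ordered effect space whose positive cone $E_+$ is pointed. Let $A$ be a finite set of positive subunital linear maps $E\to E$ that is closed under composition (i.e. $S,T\in A$ implies $S\circ T\in A$). Then for each $T\in A$ there exists an integer $n\ge 1$ such that \[ T^n(d(T))=0, \] and moreover this $n$ can be chosen with $n\le |A|$.
   Context: An ordered effect space is a triple $(E,\le,u)$ where $E$ is a real vector space, $\le$ is a preorder (reflexive and transitive) on $E$ compatible with the vector space structure ($x\le y$ implies $x+z\le y+z$ and $\lambda x\le\lambda y$ for all $z\in E$, $\lambda\ge 0$), and $u\in E_+$ is a distinguished element called the unit, where $E_+=\{x\in E: x\ge 0\}$ is the positive cone. The cone is pointed if $E_+\cap(-E_+)=\{0\}$. A linear map $T:E\to E$ is positive if $T(E_+)\subseteq E_+$, subunital if $T(u)\le u$, unital if $T(u)=u$. The defect of a subunital map $T$ is $d(T)=u-T(u)$ (so $d(T)\ge 0$). $T^n$ denotes the $n$-fold composite. *)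

(* Defs.v *)
From HB Require Import structures.
From mathcomp Require Import all_boot all_order all_algebra.
From mathcomp Require Import reals.
From Stdlib Require List.
Set Implicit Arguments. Unset Strict Implicit. Unset Printing Implicit Defensive.
Import Order.TTheory GRing.Theory Num.Theory.
Local Open Scope ring_scope.

Definition compatible_preorder (R : realType) (E : lmodType R)
  (le : E -> E -> Prop) : Prop :=
  (forall x, le x x) /\
  (forall x y z, le x y -> le y z -> le x z) /\
  (forall x y z, le x y -> le (x + z) (y + z)) /\
  (forall (l : R) x y, 0 <= l -> le x y -> le (l *: x) (l *: y)).

Definition ordered_effect_space (R : realType) (E : lmodType R)
  (le : E -> E -> Prop) (u : E) : Prop :=
  compatible_preorder le /\ le 0 u.

Definition pointed_cone (R : realType) (E : lmodType R)
  (le : E -> E -> Prop) : Prop :=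
  forall x : E, le 0 x -> le 0 (- x) -> x = 0.

Definition positive_map (R : realType) (E : lmodType R)
  (le : E -> E -> Prop) (T : E -> E) : Prop :=
  forall x, le 0 x -> le 0 (T x).

Definition subunital (R : realType) (E : lmodType R)
  (le : E -> E -> Prop) (u : E) (T : E -> E) : Prop := le (T u) u.

Definition defect (R : realType) (E : lmodType R) (u : E) (T : E -> E) : E :=
  u - T u.

(* Main.v *)
Require Import Defs.
From HB Require Import structures.
From mathcomp Require Import all_boot all_order all_algebra.
From mathcomp Require Import reals.
From mathcomp Require Import boolp.
From Stdlib Require List.
Import Order.TTheory GRing.Theory Num.Theory.
Local Open Scope ring_scope.

Lemma In_mem (Y : eqType) (x : Y) (l : seq Y) : List.In x l -> x \in l.
Proof.
elim: l => //= y l IH [->|/IH H]; by rewrite in_cons ?eqxx ?H ?orbT.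
Qed.

Lemma pigeon (X : Type) (L : seq X) (f : nat -> X) :
  (forall k, (k <= size L)%N -> List.In (f k) L) ->
  exists i j, (i < j <= size L)%N /\ f i = f j.
Proof.
move=> Hf.
pose g : nat -> {classic X} := f.
pose L' : seq {classic X} := L.
pose s := map g (iota 0 (size L).+1).
have sub : {subset s <= L'}.
  move=> x /mapP [k]; rewrite mem_iota add0n ltnS => /= Hk ->.
  by apply: In_mem; apply: Hf.
have nu : ~~ uniq s.
  apply/negP => U; have := uniq_leq_size U sub.
  by rewrite size_map size_iota ltnn.
have [i [j [lij ljs e]]] := uniqPn (g 0%N) nu.
move: ljs e; rewrite size_map size_iota ltnS => ljs.
rewrite !(nth_map 0%N) ?size_iota ?ltnS ?(ltnW (leq_trans lij ljs)) // !nth_iota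
  ?ltnS ?(ltnW (leq_trans lij ljs)) // !add0n => e.
by exists i, j; rewrite lij ljs.
Qed.

Theorem theorem4p1 (R : realType) (E : lmodType R) (le : E -> E -> Prop) (u : E)
  (A : seq (E -> E)) :
  ordered_effect_space le u ->
  pointed_cone le ->
  List.NoDup A ->
  (forall T, List.In T A -> linear T /\ positive_map le T /\ subunital le u T) ->
  (forall S T, List.In S A -> List.In T A -> List.In (S \o T) A) ->
  forall T, List.In T A ->
    exists n : nat, (1 <= n <= size A)%N /\ iter n T (defect u T) = 0.
Proof.
move=> [[lrefl [ltrans [ladd lscale]]] le0u] pt _ HA Hcomp T TA.
have [Tlin [Tpos Tsub]] := HA T TA.
have toD : forall x y, le x y -> le 0 (y - x).
  by move=> x y /(ladd _ _ (- x)); rewrite subrr.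
have ofD : forall x y, le 0 (y - x) -> le x y.
  by move=> x y /(ladd _ _ x); rewrite add0r subrK.
have linB : forall k x y, iter k T (x - y) = iter k T x - iter k T y.
  elim=> [//|k IH] x y /=; rewrite IH.
  by rewrite addrC -scaleN1r Tlin scaleN1r addrC.
have posk : forall k x, le 0 x -> le 0 (iter k T x).
  by elim=> [//|k IH] x /= Hx; apply: Tpos; apply: IH.
have step : forall k, le (iter k.+1 T u) (iter k T u).
  move=> k; apply: ofD; rewrite iterSr -linB; apply: posk; exact: toD.
have mono : forall p d, le (iter (d + p) T u) (iter p T u).
  move=> p; elim=> [|d IH]; first exact: lrefl.
  by rewrite addSn; apply: ltrans (step _) IH.
have inA : forall k, List.In (iter k.+1 T) A.
  elim=> [//|k IH]; exact: (Hcomp T _ TA IH).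
have [i [j [/andP [lij ljs] e]]] := @pigeon _ A (fun k => iter k.+1 T) (fun k _ => inA k).
exists i.+1; split; first by rewrite /= (leq_trans lij ljs).
have ej : iter i.+1 T u = iter j.+1 T u by rewrite e.
have Hle1 := step i.+1.
have Hle2 : le (iter i.+1 T u) (iter i.+2 T u).
  rewrite ej; have := mono i.+2 (j.+1 - i.+2)%N; rewrite subnK //.
have x0 := pt _ (toD _ _ Hle1); rewrite opprB in x0.
rewrite /defect linB -iterSr; exact: x0 (toD _ _ Hle2).
Qed.
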